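(* Let $\mathcal{S}$ be a state space, $\mathcal{A}$ a finite action space, $\pi_{\mathrm{ref}}$ a full-support policy, $\beta>0$, $R>0$, $r^*:\mathcal{S}\times\mathcal{A}\to[0,R]$, and let $\Pi$ be a finite policy class satisfying (I) $\pi^*_{r^*}\in\Pi$ and (II) $|\log(\pi(a|s)/\pi_{\mathrm{ref}}(a|s))|\le R/\beta$ for all $\pi\in\Pi$ and all $(s,a)$. Then $\mathrm{conv}(\Pi)$ also satisfies (I) and (II).
   Context: $\pi^*_{r^*}(a|s)\propto\pi_{\mathrm{ref}}(a|s)e^{r^*(s,a)/\beta}$. $\mathrm{conv}(\Pi)$ is the set of all policies $\sum_{i=1}^n\lambda^i\pi^i$ (pointwise in $(a|s)$) with $n\ge1$, $\lambda^i\ge0$, $\sum_i\lambda^i=1$, $\pi^i\in\Pi$. *)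

(* Defs.v *)
From HB Require Import structures.
From mathcomp Require Import all_boot all_order all_algebra.
From mathcomp Require Import classical_sets cardinality reals sequences.
From mathcomp.analysis Require Import exp.
Set Implicit Arguments. Unset Strict Implicit. Unset Printing Implicit Defensive.
Import Order.TTheory GRing.Theory Num.Theory.
Local Open Scope ring_scope.
Local Open Scope classical_set_scope.

(* A (stochastic) policy pi(a|s) is represented as pi s a. *)
Definition is_policy (R : realType) (S : Type) (A : finType)
  (pi : S -> A -> R) : Prop :=
  forall s, (forall a, 0 <= pi s a) /\ \sum_(a : A) pi s a = 1.

Definition full_support (R : realType) (S : Type) (A : finType)
  (pi : S -> A -> R) : Prop := forall s a, 0 < pi s a.

Definition pistar (R : realType) (S : Type) (A : finType)
  (piref : S -> A -> R) (beta : R) (r : S -> A -> R) : S -> A -> R :=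
  fun s a => piref s a * expR (r s a / beta) /
             \sum_(b : A) piref s b * expR (r s b / beta).

Definition conv (R : realType) (S : Type) (A : finType)
  (Pi : set (S -> A -> R)) : set (S -> A -> R) :=
  [set p | exists (n : nat) (lam : 'I_n -> R) (pis : 'I_n -> S -> A -> R),
     [/\ (0 < n)%N, (forall i, 0 <= lam i), \sum_(i < n) lam i = 1,
         (forall i, Pi (pis i)) &
         p = fun s a => \sum_(i < n) lam i * pis i s a]].

Definition condI (R : realType) (S : Type) (A : finType)
  (piref : S -> A -> R) (beta : R) (rstar : S -> A -> R)
  (Pi : set (S -> A -> R)) : Prop :=
  Pi (pistar piref beta rstar).

(* Condition (II); the log ratio being defined requires pi(a|s) > 0 *)
Definition condII (R : realType) (S : Type) (A : finType)
  (piref : S -> A -> R) (beta Rb : R) (Pi : set (S -> A -> R)) : Prop :=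
  forall pi, Pi pi -> forall s a,
    0 < pi s a /\ `| ln (pi s a / piref s a) | <= Rb / beta.

(* Main.v *)
Require Import Defs.
From HB Require Import structures.
From mathcomp Require Import all_boot all_order all_algebra.
From mathcomp Require Import classical_sets cardinality reals sequences.
From mathcomp.analysis Require Import exp.
From mathcomp Require boolp.
Import Order.TTheory GRing.Theory Num.Theory.
Local Open Scope ring_scope.
Local Open Scope classical_set_scope.

Lemma abs_ln_iff (R : realType) (x c : R) : 0 < x ->
  (`|ln x| <= c) = (expR (- c) <= x <= expR c).
Proof.
move=> x0.
have px : x \is Num.pos by rewrite posrE.
rewrite ler_norml.
rewrite -[in RHS](lnK px) !ler_expR.
by [].
Qed.

Theorem lemmaH1 (R : realType) (S : Type) (A : finType)
  (piref : S -> A -> R) (beta Rb : R) (rstar : S -> A -> R)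
  (Pi : set (S -> A -> R)) :
  is_policy piref -> full_support piref ->
  0 < beta -> 0 < Rb ->
  (forall s a, 0 <= rstar s a <= Rb) ->
  finite_set Pi ->
  (forall pi, Pi pi -> is_policy pi) ->
  condI piref beta rstar Pi ->
  condII piref beta Rb Pi ->
  condI piref beta rstar (conv Pi) /\ condII piref beta Rb (conv Pi).
Proof.
move=> _ fs _ _ _ _ _ hI hII; split.
  exists 1%N, (fun _ => 1), (fun _ => pistar piref beta rstar); split => //.
    by rewrite big_ord1.
  by apply: boolp.funext => s; apply: boolp.funext => a; rewrite big_ord1 mul1r.
move=> p [n [lam [pis [n0 lam0 lam1 Hpis ->]]]] s a.
set c := Rb / beta.
have pr := fs s a.
have bnd : forall i, piref s a * expR (- c) <= pis i s a <= piref s a * expR c.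
  move=> i; have [h1 h2] := hII _ (Hpis i) s a.
  move: h2; rewrite abs_ln_iff ?divr_gt0 // => /andP [l u].
  rewrite ler_pdivlMr // in l; rewrite ler_pdivrMr // in u.
  by rewrite ![piref s a * _]mulrC l u.
have lo : piref s a * expR (- c) <= \sum_(i < n) lam i * pis i s a.
  rewrite -[X in X <= _]mul1r -lam1 mulr_suml.
  by apply: ler_sum => i _; rewrite ler_wpM2l //; case/andP: (bnd i).
have hi : \sum_(i < n) lam i * pis i s a <= piref s a * expR c.
  rewrite -[X in _ <= X]mul1r -lam1 mulr_suml.
  by apply: ler_sum => i _; rewrite ler_wpM2l //; case/andP: (bnd i).
have pos : 0 < \sum_(i < n) lam i * pis i s a.
  by apply: lt_le_trans lo; rewrite mulr_gt0 // expR_gt0.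
split => //.
rewrite abs_ln_iff ?divr_gt0 //.
by rewrite ler_pdivlMr // ler_pdivrMr // ![_ * piref s a]mulrC lo hi.
Qed.
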